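(* Let $k\ge 1$ and $m\ge 0$ be integers, set $A=\lfloor m/k\rfloor$, and let $Q$ be an even polynomial with real coefficients of degree at most $2m$. Then there exist real numbers $C_{a,b,j,l}$, indexed by $0\le a\le A$, $0\le b\le k-1$, $0\le j\le k$, $l\in\{0,1\}$, such that $$Q(x)=\sum_{a=0}^{A}\sum_{b=0}^{k-1}\sum_{j=0}^{k}\sum_{l=0}^{1}C_{a,b,j,l}\,T_a(x)^{2j}\,T_b(x)^{2l}\qquad\text{for all }x,$$ and $$\sum_{a,b,j,l}|C_{a,b,j,l}|\le 3k\,(A+1)(A+2)\,(1+\sqrt2)^{2k}\,\|Q\|_{[-1,1]}.$$ In particular, when $2m=d-k$, this $\ell^1$-norm is $O\big(\|Q\|_{[-1,1]}\,d^2(1+\sqrt2)^{2k}/k\big)$, and each polynomial $T_a(x)^{2j}T_b(x)^{2l}$ equals $\prod_{s=1}^k|\mathcal{R}_s(x)|^2$ on $\mathbb{R}$ for real polynomials $\mathcal{R}_s\in\{1,T_a,T_b,T_aT_b\}$ of definite parity, degree at most $A+k-1$, and $\|\mathcal{R}_s\|_{[-1,1]}\le 1$.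
   Context: $T_m$ denotes the Chebyshev polynomial of the first kind, i.e. the polynomial with $T_m(\cos\theta)=\cos(m\theta)$ for all real $\theta$. For a function $f$ on $[-1,1]$, $\|f\|_{[-1,1]}:=\max_{x\in[-1,1]}|f(x)|$. *)

(* Defs.v *)
From HB Require Import structures.
From mathcomp Require Import all_boot all_order all_algebra.
From mathcomp Require Import all_classical all_reals all_analysis.
Set Implicit Arguments. Unset Strict Implicit. Unset Printing Implicit Defensive.
Import Order.TTheory GRing.Theory Num.Theory.
Local Open Scope ring_scope.
Local Open Scope classical_set_scope.

Definition supnorm11 {R : realType} (p : {poly R}) : R :=
  sup [set `|p.[x]| | x in `[(-1 : R), 1]%classic].

Definition is_even_polyn {R : realType} (p : {poly R}) : Prop :=
  p \Po (- 'X) = p.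
Definition is_odd_polyn {R : realType} (p : {poly R}) : Prop :=
  p \Po (- 'X) = - p.

Definition is_chebyshev_family {R : realType} (T : nat -> {poly R}) : Prop :=
  forall (n : nat) (t : R), (T n).[cos t] = cos (n%:R * t).

(* Main.v *)
Require Import Defs.
From HB Require Import structures.
From mathcomp Require Import all_boot all_order all_algebra.
From mathcomp Require Import all_classical all_reals all_analysis.
From mathcomp Require Import ring lra zify.
Import Order.TTheory GRing.Theory Num.Theory.
Set Implicit Arguments. Unset Strict Implicit. Unset Printing Implicit Defensive.
Local Open Scope ring_scope.

Section Cheb.
Variable R : realType.

Fixpoint chebp (n : nat) : {poly R} * {poly R} :=
  match n with
  | 0%N => (1, 'X)
  | n'.+1 => let: (a, b) := chebp n' in (b, 2%:R *: ('X * b) - a)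
  end.
Definition cheb n := (chebp n).1.

Lemma cheb0 : cheb 0 = 1. Proof. by []. Qed.
Lemma cheb1 : cheb 1 = 'X. Proof. by []. Qed.
Lemma chebSS n : cheb n.+2 = 2%:R *: ('X * cheb n.+1) - cheb n.
Proof. rewrite /cheb /=. by case: (chebp n). Qed.

Lemma cheb_ind (P : nat -> Prop) : P 0%N -> P 1%N ->
  (forall n, P n -> P n.+1 -> P n.+2) -> forall n, P n.
Proof.
move=> h0 h1 hS n; suff: P n /\ P n.+1 by case.
elim: n => [|n [IH1 IH2]]; first by split.
by split => //; apply: hS.
Qed.

Lemma cheb_cos n t : (cheb n).[cos t] = cos (n%:R * t).
Proof.
elim/cheb_ind: n t => [t|t|n IH1 IH2 t].
- by rewrite cheb0 hornerC mul0r cos0.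
- by rewrite cheb1 hornerX mul1r.
rewrite chebSS hornerD hornerN hornerZ hornerM hornerX IH1 IH2.
have e1 : n.+2%:R * t = n.+1%:R * t + t by rewrite -[n.+2]addn1 natrD mulrDl mul1r.
have e2 : n%:R * t = n.+1%:R * t - t by rewrite -[n.+1]addn1 natrD mulrDl mul1r addrK.
rewrite e1 e2 (cosD (n.+1%:R * t) t) (cosB (n.+1%:R * t) t).
ring.
Qed.

Lemma poly_eq_cos (p q : {poly R}) : (forall t, p.[cos t] = q.[cos t]) -> p = q.
Proof.
move=> h; apply/eqP; rewrite -subr_eq0; apply/eqP.
set r := p - q.
have hr : forall x : R, -1 <= x <= 1 -> r.[x] = 0.
  move=> x hx; have := h (acos x); rewrite acosK; last by rewrite in_itv.
  by move=> e; rewrite /r hornerD hornerN e subrr.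
apply: (@roots_geq_poly_eq0 _ r [seq ((i.+1)%:R)^-1 | i <- iota 0 (size r)]).
- apply/allP => y /mapP [i _ ->]; rewrite /root hr //.
  apply/andP; split; first by apply: (le_trans (lerN10 _)); rewrite invr_ge0 ler0n.
  by rewrite invf_le1 ?ltr0n ?ler1n.
- rewrite map_inj_uniq ?iota_uniq // => i j /eqP; rewrite (inj_eq invr_inj).
  by rewrite eqr_nat => /eqP [].
- by rewrite size_map size_iota.
Qed.

Lemma size_cheb n : size (cheb n) = n.+1.
Proof.
elim/cheb_ind: n => [|| n IH1 IH2]; first by rewrite cheb0 size_poly1.
  by rewrite cheb1 size_polyX.
have nz : cheb n.+1 != 0 by rewrite -size_poly_eq0 IH2.
have h : size (2%:R *: ('X * cheb n.+1)) = n.+3.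
  by rewrite size_scale ?pnatr_eq0 // mulrC size_mulX // IH2.
by rewrite chebSS size_polyDl h // size_polyN IH1.
Qed.

Lemma cheb_neg n x : (cheb n).[- x] = (-1) ^+ n * (cheb n).[x].
Proof.
elim/cheb_ind: n => [|| n IH1 IH2].
- by rewrite cheb0 !hornerC expr0 mul1r.
- by rewrite cheb1 !hornerX expr1 mulN1r.
rewrite chebSS !(hornerD, hornerN, hornerZ, hornerM, hornerX) IH1 IH2 !exprS; ring.
Qed.

Definition L1 (N : nat) (p : {poly R}) := \sum_(i < N) `|p`_i|.

Lemma L1_ge0 N p : 0 <= L1 N p.
Proof. by apply: sumr_ge0 => i _. Qed.

Lemma L1_mulX N p : L1 N ('X * p) <= L1 N p.
Proof.
case: N => [|N]; first by rewrite /L1 !big_ord0.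
rewrite /L1 big_ord_recl /= coefXM /= normr0 add0r [X in _ <= X]big_ord_recr /=.
rewrite -[X in X <= _]addr0; apply: lerD; last by [].
by apply: ler_sum => i _; rewrite coefXM /=.
Qed.

Lemma L1D N p q : L1 N (p + q) <= L1 N p + L1 N q.
Proof. rewrite /L1 -big_split /=; apply: ler_sum => i _; rewrite coefD; exact: ler_normD. Qed.
Lemma L1N N p : L1 N (- p) = L1 N p.
Proof. by rewrite /L1; apply: eq_bigr => i _; rewrite coefN normrN. Qed.
Lemma L1Z N c p : L1 N (c *: p) = `|c| * L1 N p.
Proof. by rewrite /L1 mulr_sumr; apply: eq_bigr => i _; rewrite coefZ normrM. Qed.

Definition alpha : R := 1 + Num.sqrt 2.
Lemma alpha_ge1 : 1 <= alpha.
Proof. by rewrite /alpha lerDl sqrtr_ge0. Qed.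
Lemma alpha2 : alpha ^+ 2 = 2 * alpha + 1.
Proof. rewrite /alpha sqrrD sqr_sqrtr ?ler0n //; ring. Qed.

Lemma L1_cheb N n : L1 N (cheb n) <= alpha ^+ n.
Proof.
elim/cheb_ind: n => [|| n IH1 IH2].
- rewrite cheb0 expr0 /L1; case: N => [|N]; first by rewrite big_ord0.
  rewrite big_ord_recl coef1 /= normr1 big1 ?addr0 // => i _; by rewrite coef1 /= normr0.
- rewrite cheb1 expr1 (le_trans _ alpha_ge1) // /L1; case: N => [|N]; first by rewrite big_ord0.
  rewrite big_ord_recl coefX /= normr0 add0r; case: N => [|N]; first by rewrite big_ord0.
  rewrite big_ord_recl coefX /= normr1 big1 ?addr0 // => i _; by rewrite coefX /= normr0.
rewrite chebSS (le_trans (L1D _ _ _)) // L1N L1Z.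
have -> : alpha ^+ n.+2 = 2 * alpha ^+ n.+1 + alpha ^+ n.
  by rewrite !exprS mulrA -expr2 alpha2; ring.
apply: lerD => //; rewrite ger0_norm ?ler0n // ler_pM2l ?ltr0n //.
exact: le_trans (L1_mulX _ _) IH2.
Qed.
End Cheb.

Section TT.
Variable R : realType.
Variable T : nat -> {poly R}.
Hypothesis hT : is_chebyshev_family T.

Lemma T_cheb n : T n = cheb R n.
Proof. by apply: poly_eq_cos => t; rewrite hT cheb_cos. Qed.

Lemma T0 : T 0 = 1. Proof. by rewrite T_cheb. Qed.
Lemma T2 y : (T 2).[y] = 2 * y ^+ 2 - 1.
Proof. by rewrite T_cheb chebSS cheb1 cheb0 hornerD hornerN hornerZ hornerM hornerX hornerC expr2. Qed.
Lemma size_T n : size (T n) = n.+1. Proof. by rewrite T_cheb size_cheb. Qed.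
Lemma T_neg n x : (T n).[- x] = (-1) ^+ n * (T n).[x].
Proof. by rewrite T_cheb cheb_neg. Qed.

Lemma T_mul n m : T (n * m) = T n \Po T m.
Proof.
apply: poly_eq_cos => t; by rewrite horner_comp !hT natrM -mulrA.
Qed.

Lemma T_prod p q x : (q <= p)%N ->
  2 * (T p).[x] * (T q).[x] = (T (p + q)).[x] + (T (p - q)).[x].
Proof.
move=> hqp; have -> : 2 * (T p).[x] * (T q).[x] = (2%:R *: (T p * T q)).[x].
  by rewrite hornerZ hornerM mulrA.
rewrite -hornerD; congr (_.[x]); apply: poly_eq_cos => t.
rewrite hornerD hornerZ hornerM !hT natrD natrB // (mulrDl p%:R q%:R t) mulrBl.
rewrite (cosD (p%:R * t) (q%:R * t)) (cosB (p%:R * t) (q%:R * t)); ring.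
Qed.

Lemma T_le1 n x : -1 <= x <= 1 -> `|(T n).[x]| <= 1.
Proof.
move=> hx; rewrite -(acosK (x:=x)); last by rewrite in_itv.
rewrite hT ler_norml cos_le1 andbT; exact: cos_geN1.
Qed.
End TT.

Section Sup.
Variable R : realType.
Local Open Scope classical_set_scope.

Lemma horner_bound (p : {poly R}) x : -1 <= x <= 1 -> `|p.[x]| <= \sum_(i < size p) `|p`_i|.
Proof.
move=> hx; rewrite horner_coef (le_trans (ler_norm_sum _ _ _)) //.
apply: ler_sum => i _; rewrite normrM -[X in _ <= X]mulr1 ler_wpM2l //.
by rewrite normrX exprn_ile1 // ler_norml.
Qed.

Lemma supnorm_ub (p : {poly R}) x : -1 <= x <= 1 -> `|p.[x]| <= supnorm11 p.
Proof.
move=> hx; apply: ub_le_sup.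
  exists (\sum_(i < size p) `|p`_i|) => y [z hz <-]; apply: horner_bound.
  by move: hz; rewrite /= in_itv.
by exists x => //=; rewrite in_itv.
Qed.

Lemma supnorm_ge0 (p : {poly R}) : 0 <= supnorm11 p.
Proof. by apply: le_trans (@supnorm_ub p 0 _) => //; rewrite lerN10 ler01. Qed.

Lemma supnorm_le1 (p : {poly R}) : (forall x, -1 <= x <= 1 -> `|p.[x]| <= 1) -> supnorm11 p <= 1.
Proof.
move=> h; apply: ge_sup.
  by exists `|p.[0]|, 0 => //=; rewrite in_itv /= lerN10 ler01.
by move=> y [z hz <-]; apply: h; move: hz; rewrite /= in_itv.
Qed.
End Sup.

Section Part2.
Variable R : realType.
Variable T : nat -> {poly R}.
Hypothesis hT : is_chebyshev_family T.

Definition parp (p : {poly R}) := is_even_polyn p \/ is_odd_polyn p.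

Lemma parpM p q : parp p -> parp q -> parp (p * q).
Proof.
rewrite /parp /is_even_polyn /is_odd_polyn comp_polyM.
by case=> ->; case=> ->; rewrite ?mulrN ?mulNr ?opprK; auto.
Qed.

Lemma parp1 : parp 1.
Proof. by left; rewrite /is_even_polyn -polyC1 comp_polyC. Qed.

Lemma parpT n : parp (T n).
Proof.
have e : T n \Po (- 'X) = (-1) ^+ n *: T n.
  apply: poly_eq_cos => t; rewrite horner_comp hornerN hornerX hornerZ.
  by rewrite (T_neg hT).
rewrite /parp /is_even_polyn /is_odd_polyn e -signr_odd.
by case: (odd n); [right; rewrite expr1 scaleN1r | left; rewrite expr0 scale1r].
Qed.

Lemma prod_if_lt (k j : nat) (y : R) :
  \prod_(s < k) (if (s < j)%N then y else 1) = y ^+ (minn j k).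
Proof.
elim: k => [|k IH]; first by rewrite big_ord0 minn0 expr0.
rewrite big_ord_recr /= IH; case: (ltnP k j) => h.
  by rewrite (minn_idPr h) exprSr.
by rewrite mulr1 (minn_idPl (leqW h)).
Qed.

Lemma prod_if_eq (k p : nat) (c : bool) (y : R) : (p < k)%N ->
  \prod_(s < k) (if c && (s == p :> nat) then y else 1) = if c then y else 1.
Proof.
move=> hp; case: c; last by rewrite big1.
rewrite (bigD1 (Ordinal hp)) //= eqxx big1 ?mulr1 // => i hi.
by case: eqP => // e; move: hi; rewrite -val_eqE /= e eqxx.
Qed.

Lemma part2 (A k a b j l : nat) : (a <= A)%N -> (b < k)%N -> (j <= k)%N -> (l <= 1)%N ->
  exists Rs : 'I_k -> {poly R},
       (forall x : R, (T a).[x] ^+ (2 * j) * (T b).[x] ^+ (2 * l)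
                      = \prod_(s < k) `|(Rs s).[x]| ^+ 2) /\
       (forall s : 'I_k,
          Rs s \in [:: 1; T a; T b; T a * T b] /\
          (is_even_polyn (Rs s) \/ is_odd_polyn (Rs s)) /\
          (size (Rs s) <= A + k)%N /\
          supnorm11 (Rs s) <= 1).
Proof.
move=> ha hb hj hl.
pose pos := if (j < k)%N then j else 0%N.
have hpos : (pos < k)%N by rewrite /pos; case: ifP => [->|_] //; exact: leq_ltn_trans (leq0n b) hb.
exists (fun s => (if (s < j)%N then T a else 1) * (if (l == 1%N) && (s == pos :> nat) then T b else 1)).
split.
  move=> x /=; under eq_bigr => s _ do rewrite hornerM normrM exprMn.
  rewrite big_split /=.
  have -> : \prod_(i < k) `|(if (i < j)%N then T a else 1).[x]| ^+ 2
      = \prod_(i < k) (if (i < j)%N then (T a).[x] ^+ 2 else 1).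
    by apply: eq_bigr => i _; case: ifP; rewrite ?hornerC ?normr1 ?expr1n // real_normK ?num_real.
  have -> : \prod_(i < k) `|(if (l == 1%N) && (i == pos :> nat) then T b else 1).[x]| ^+ 2
      = \prod_(i < k) (if (l == 1%N) && (i == pos :> nat) then (T b).[x] ^+ 2 else 1).
    by apply: eq_bigr => i _; case: ifP; rewrite ?hornerC ?normr1 ?expr1n // real_normK ?num_real.
  rewrite prod_if_lt prod_if_eq // (minn_idPl hj) -exprM mulnC.
  by case: l hl => [|[|]] //= _; rewrite ?muln0 ?expr0 ?muln1.
move=> s; split.
  by case: ifP => _; case: ifP => _; rewrite ?mul1r ?mulr1 !inE eqxx ?orbT.
split.
  apply: parpM; case: ifP => _; (exact: parpT || exact: parp1).
split.
  apply: leq_trans (size_polyMleq _ _) _.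
  have h1 : (size (if (s < j)%N then T a else (1%R : {poly R})) <= A.+1)%N.
    by case: ifP; rewrite ?size_poly1 // (size_T hT).
  have h2 : (size (if (l == 1%N) && (s == pos :> nat) then T b else (1%R : {poly R})) <= k)%N.
    by case: ifP => _; rewrite ?size_poly1 ?(size_T hT) //; apply: leq_ltn_trans (leq0n b) hb.
  by rewrite -subn1 leq_subLR add1n -addSn leq_add.
apply: supnorm_le1 => x hx; rewrite hornerM normrM mulr_ile1 //.
- by case: ifP; rewrite ?hornerC ?normr1 // => _; apply: T_le1.
- by case: ifP; rewrite ?hornerC ?normr1 // => _; apply: T_le1.
Qed.
End Part2.

Section Rep.
Variable R : realType.
Variable T : nat -> {poly R}.
Variables A k : nat.

Definition S4 (F : 'I_A.+1 -> 'I_k -> 'I_k.+1 -> 'I_2 -> R) :=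
  \sum_(a < A.+1) \sum_(b < k) \sum_(j < k.+1) \sum_(l < 2) F a b j l.

Lemma S4D F G : S4 (fun a b j l => F a b j l + G a b j l) = S4 F + S4 G.
Proof.
rewrite /S4 -big_split; apply: eq_bigr => a _; rewrite -big_split; apply: eq_bigr => b _.
rewrite -big_split; apply: eq_bigr => j _; by rewrite -big_split.
Qed.

Lemma S4Z c F : S4 (fun a b j l => c * F a b j l) = c * S4 F.
Proof.
rewrite /S4 mulr_sumr; apply: eq_bigr => a _; rewrite mulr_sumr; apply: eq_bigr => b _.
rewrite mulr_sumr; apply: eq_bigr => j _; by rewrite mulr_sumr.
Qed.

Lemma S4_le F G : (forall a b j l, F a b j l <= G a b j l) -> S4 F <= S4 G.
Proof.
move=> h; rewrite /S4; apply: ler_sum => a _; apply: ler_sum => b _.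
apply: ler_sum => j _; apply: ler_sum => l _; exact: h.
Qed.

Lemma sum_delta n (i0 : 'I_n) (F : 'I_n -> R) :
  \sum_(i < n) (if i == i0 then F i else 0) = F i0.
Proof. by rewrite -big_mkcond big_pred1_eq. Qed.

Lemma S4_delta a0 b0 j0 l0 F :
  S4 (fun a b j l => if (a == a0) && (b == b0) && (j == j0) && (l == l0) then F a b j l else 0)
  = F a0 b0 j0 l0.
Proof.
rewrite /S4 -[RHS](sum_delta a0 (fun a => F a b0 j0 l0)); apply: eq_bigr => a _.
case: eqP => [->|_] /=; last by rewrite big1 // => b _; rewrite big1 // => j _; rewrite big1.
rewrite -[RHS](sum_delta b0 (fun b => F a0 b j0 l0)); apply: eq_bigr => b _.
case: eqP => [->|_] /=; last by rewrite big1 // => j _; rewrite big1.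
rewrite -[RHS](sum_delta j0 (fun j => F a0 b0 j l0)); apply: eq_bigr => j _.
case: eqP => [->|_] /=; last by rewrite big1.
exact: sum_delta.
Qed.

Definition Rep (f : R -> R) (r : R) :=
  exists C : 'I_A.+1 -> 'I_k -> 'I_k.+1 -> 'I_2 -> R,
    (forall x, f x = S4 (fun a b j l => C a b j l * (T a).[x] ^+ (2 * j) * (T b).[x] ^+ (2 * l)))
    /\ S4 (fun a b j l => `|C a b j l|) <= r.

Lemma Rep_ext f g r : (forall x, f x = g x) -> Rep g r -> Rep f r.
Proof. by move=> e [C [h1 h2]]; exists C; split => // x; rewrite e h1. Qed.

Lemma Rep_le f r r' : r <= r' -> Rep f r -> Rep f r'.
Proof. by move=> e [C [h1 h2]]; exists C; split => //; apply: le_trans e. Qed.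

Lemma Rep_add f g r s : Rep f r -> Rep g s -> Rep (fun x => f x + g x) (r + s).
Proof.
move=> [C [h1 h2]] [D [h3 h4]]; exists (fun a b j l => C a b j l + D a b j l); split.
  by move=> x; rewrite h1 h3 -S4D; congr S4; do 4! apply: funext => ?; rewrite !mulrDl.
apply: le_trans (lerD h2 h4); rewrite -S4D; apply: S4_le => *; exact: ler_normD.
Qed.

Lemma Rep_scale c f r : Rep f r -> Rep (fun x => c * f x) (`|c| * r).
Proof.
move=> [C [h1 h2]]; exists (fun a b j l => c * C a b j l); split.
  by move=> x; rewrite h1 -S4Z; congr S4; do 4! apply: funext => ?; rewrite !mulrA.
rewrite (_ : S4 _ = `|c| * S4 (fun a b j l => `|C a b j l|)).
  by apply: ler_wpM2l.
by rewrite -S4Z; congr S4; do 4! apply: funext => ?; rewrite normrM.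
Qed.

Lemma Rep0 : Rep (fun _ => 0) 0.
Proof.
exists (fun _ _ _ _ => 0); split.
  by move=> x; rewrite -[LHS](mul0r (S4 (fun _ _ _ _ => 0))) -S4Z; congr S4; do 4! apply: funext => ?; rewrite !mul0r.
by rewrite -[X in _ <= X](mul0r (S4 (fun _ _ _ _ => 0))) -S4Z le_eqVlt; apply/orP; left; apply/eqP;
  congr S4; do 4! apply: funext => ?; rewrite normr0 mul0r.
Qed.

Lemma Rep_sum N (F : nat -> R -> R) (r : nat -> R) :
  (forall i, (i < N)%N -> Rep (F i) (r i)) ->
  Rep (fun x => \sum_(i < N) F i x) (\sum_(i < N) r i).
Proof.
elim: N => [|N IH] h.
  apply: (Rep_ext (g := fun _ => 0)); first by move=> x; rewrite big_ord0.
  by rewrite big_ord0; apply: Rep0.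
apply: (Rep_ext (g := fun x => \sum_(i < N) F i x + F N x)).
  by move=> x; rewrite big_ord_recr.
rewrite big_ord_recr; apply: Rep_add; last exact: h.
by apply: IH => i hi; apply: h; apply: ltnW.
Qed.

Lemma Rep_basis (a : 'I_A.+1) (b : 'I_k) (j : 'I_k.+1) (l : 'I_2) :
  Rep (fun x => (T a).[x] ^+ (2 * j) * (T b).[x] ^+ (2 * l)) 1.
Proof.
exists (fun a' b' j' l' => if (a' == a) && (b' == b) && (j' == j) && (l' == l) then 1 else 0); split.
  move=> x; rewrite -(S4_delta a b j l (fun a b j l => (T a).[x] ^+ (2 * j) * (T b).[x] ^+ (2 * l))).
  by congr S4; do 4! apply: funext => ?; case: ifP; rewrite ?mul1r ?mul0r.
rewrite (_ : S4 _ = 1) //.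
rewrite -[RHS](S4_delta a b j l (fun _ _ _ _ => 1)).
by congr S4; do 4! apply: funext => ?; case: ifP; rewrite ?normr1 ?normr0.
Qed.
End Rep.

Section Base.
Variable R : realType.
Variable T : nat -> {poly R}.
Hypothesis hT : is_chebyshev_family T.
Variables A k : nat.

Lemma even_expand (p : {poly R}) y : (forall x, p.[- x] = p.[x]) ->
  p.[y] = \sum_(i < size p) (if odd i then 0 else p`_i) * y ^+ (2 * i./2).
Proof.
move=> hp.
have -> : p.[y] = (p.[y] + p.[- y]) / 2 by rewrite hp; lra.
rewrite !horner_coef -big_split mulr_suml; apply: eq_bigr => i _ /=.
rewrite exprNn -signr_odd; have := odd_double_half i.
case: (odd i) => /= hi; first by rewrite expr1 mulN1r mulrN subrr mul0r mul0r.
rewrite add0n in hi; rewrite expr0 mul1r mul2n hi; lra.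
Qed.

Lemma Rep_base (a j b : nat) : (a <= A)%N -> (j <= k)%N -> (b < k)%N ->
  Rep T A k (fun x => (T (2 * j * a)).[x] * (T (2 * b)).[x]) (3 * alpha R ^+ (2 * k)).
Proof.
move=> ha hj hb.
have ha' : (a < A.+1)%N by [].
set p := T (2 * j).
have hsz : size p = (2 * j).+1 by rewrite /p (size_T hT).
have hp : forall x, p.[- x] = p.[x].
  by move=> x; rewrite /p (T_neg hT) exprM sqrrN !expr1n mul1r.
pose e i := if odd i then 0 else p`_i.
pose F := fun (i : nat) (x : R) => (2 * e i) * (T a).[x] ^+ (2 * i./2)%N * (T b).[x] ^+ (2 * 1)%N
                     + (- e i) * (T a).[x] ^+ (2 * i./2)%N * (T b).[x] ^+ (2 * 0)%N.
have key : forall x, (T (2 * j * a)).[x] * (T (2 * b)).[x] = \sum_(i < size p) F i x.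
  move=> x; rewrite (T_mul hT) horner_comp -/p (even_expand _ hp).
  rewrite (T_mul hT 2 b) horner_comp (T2 hT) mulr_suml.
  by apply: eq_bigr => i _; rewrite /F /e muln0 expr0 mulr1 muln1; ring.
apply: (Rep_ext key).
apply: (Rep_le (r := \sum_(i < size p) 3 * `|p`_i|)); last first.
  apply: (@Rep_sum R T A k (size p) F (fun i => 3 * `|p`_i|)) => i hi.
  have hi2 : (i./2 < k.+1)%N.
    rewrite ltnS (leq_trans _ hj) //; move: hi; rewrite hsz ltnS => hi.
    by rewrite -(leq_pmul2l (isT : (0 < 2)%N)) (leq_trans _ hi) // -{2}(odd_double_half i) -mul2n leq_addl.
  have h := Rep_add (Rep_scale (2 * e i) (Rep_basis T (Ordinal ha') (Ordinal hb) (Ordinal hi2) (Ordinal (isT : (1 < 2)%N))))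
                (Rep_scale (- e i) (Rep_basis T (Ordinal ha') (Ordinal hb) (Ordinal hi2) (Ordinal (isT : (0 < 2)%N)))).
  apply: (Rep_ext _ (Rep_le _ h)).
    by move=> x; rewrite /F /= !mulrA.
  rewrite !mulr1 normrN normrM ger0_norm // /e; case: (odd i); rewrite ?normr0 ?mulr0 ?addr0 ?normr_ge0 //; lra.
rewrite -mulr_sumr ler_wpM2l //.
apply: (le_trans (y := alpha R ^+ (2 * j))).
  by have := L1_cheb R (size p) (2 * j); rewrite -(T_cheb hT) -/p /L1.
by apply: ler_weXn2l; [exact: alpha_ge1 | rewrite leq_mul2l hj orbT].
Qed.
End Base.

Section Rec.
Variable R : realType.
Variable T : nat -> {poly R}.
Hypothesis hT : is_chebyshev_family T.
Variables A k : nat.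

Lemma Rep_T2n (a b : nat) : (a <= A)%N -> (0 < b < k)%N ->
  Rep T A k (fun x => (T (2 * (a * k + b))).[x]) (3 * alpha R ^+ (2 * k) * (2 * a + 1)%:R).
Proof.
elim: a b => [|a IH] b ha /andP [hb0 hbk].
  apply: (Rep_ext _ (Rep_le _ (Rep_base hT (A:=A) (k:=k) (a:=0) (j:=0) (b:=b) _ _ hbk))) => //.
  - by move=> x; rewrite muln0 (T0 hT) hornerC mul1r mul0n add0n.
  - by rewrite mulr1.
have hab : (a <= A)%N by apply: ltnW.
have hkb : (0 < k - b < k)%N by lia.
have h := Rep_add (Rep_scale 2 (Rep_base hT (A:=A) (k:=k) (a:=a.+1) (j:=k) (b:=b) ha (leqnn k) hbk))
                  (Rep_scale (-1) (IH (k - b)%N hab hkb)).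
apply: (Rep_ext _ (Rep_le _ h)).
  move=> x /=.
  have e := @T_prod R T hT (2 * k * a.+1) (2 * b) x.
  have e1 : (2 * k * a.+1 + 2 * b = 2 * (a.+1 * k + b))%N by ring.
  have e2 : (2 * k * a.+1 - 2 * b = 2 * (a * k + (k - b)))%N by nia.
  rewrite e1 e2 in e; rewrite -[X in X = _]addr0 -(subrr (T (2 * (a * k + (k - b)))).[x]).
  rewrite addrA -e; last by nia.
  ring.
rewrite normrN normr1 ger0_norm ?ler0n // mul1r natrD natrM; lra.
Qed.

Definition Wn := if k == 1%N then 1%N else (2 * A + 1)%N.

Lemma Rep_T2n_all n : (0 < k)%N -> (n %/ k <= A)%N ->
  Rep T A k (fun x => (T (2 * n)).[x]) (3 * alpha R ^+ (2 * k) * (Wn)%:R).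
Proof.
move=> hk hn.
have hW1 : (1 <= Wn)%N by rewrite /Wn; case: ifP => // _; rewrite addn1.
have hdiv := divn_eq n k.
case: (posnP (n %% k)) => hr.
  apply: (Rep_ext _ (Rep_le _ (Rep_base hT (A:=A) (k:=k) (a:=n %/ k) (j:=k) (b:=0) hn (leqnn k) hk))).
    move=> x; rewrite muln0 (T0 hT) hornerC mulr1; congr (T _).[x].
    by rewrite hr addn0 in hdiv; rewrite [in LHS]hdiv; ring.
  by rewrite -[X in X <= _]mulr1 ler_wpM2l ?mulr_ge0 ?exprn_ge0 ?ler0n ?ler1n // (le_trans ler01 (alpha_ge1 R)).
have hk1 : k != 1%N by apply/eqP => e; move: hr; rewrite e modn1.
apply: (Rep_ext _ (Rep_le _ (Rep_T2n (a := n %/ k) (b := n %% k) hn _))).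
- by move=> x; rewrite -hdiv.
- rewrite ler_wpM2l ?mulr_ge0 ?exprn_ge0 ?ler0n // ?(le_trans ler01 (alpha_ge1 R)) //.
  by rewrite /Wn (negbTE hk1) ler_nat leq_add2r leq_mul2l hn orbT.
- by rewrite hr ltn_pmod.
Qed.
End Rec.

Section Expand.
Variable R : realType.
Variable T : nat -> {poly R}.
Hypothesis hT : is_chebyshev_family T.

Lemma cheb_expand N (p : {poly R}) : (size p <= N)%N ->
  exists c : nat -> R, p = \sum_(i < N) c i *: T i.
Proof.
elim: N p => [|N IH] p hp.
  exists (fun _ => 0); rewrite big_ord0; apply/eqP; rewrite -size_poly_eq0.
  by move: hp; rewrite leqn0.
have hTN : (T N)`_N != 0.
  have := size_T hT N; move=> hs.
  have : lead_coef (T N) != 0 by rewrite lead_coef_eq0 -size_poly_eq0 hs.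
  by rewrite lead_coefE hs.
pose lam := p`_N / (T N)`_N.
have hq : (size (p - lam *: T N)%R <= N)%N.
  apply/leq_sizeP => j hj; rewrite coefB coefZ.
  case: (ltngtP j N) => [|h|->]; first by rewrite ltnNge hj.
  - have h1 : p`_j = 0 by move/leq_sizeP: hp; apply.
    have h2 : (T N)`_j = 0 by move: (leqnn (size (T N))); move/leq_sizeP; apply; rewrite (size_T hT).
    by rewrite h1 h2 mulr0 subr0.
  - by rewrite /lam mulfVK // subrr.
have [c hc] := IH _ hq.
exists (fun i => if i == N then lam else c i).
rewrite big_ord_recr /= eqxx -[p](subrK (lam *: T N)) hc; congr (_ + _).
by apply: eq_bigr => i _; rewrite (ltn_eqF (ltn_ord i)).
Qed.

Lemma sum_even (f : nat -> R) m :
  \sum_(p < (2 * m).+1) (if odd p then 0 else f p) = \sum_(n < m.+1) f (2 * n)%N.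
Proof.
elim: m => [|m IH]; first by rewrite !big_ord_recr !big_ord0 /= muln0.
have -> : (2 * m.+1).+1 = ((2 * m).+1).+2 by rewrite mulnS.
rewrite big_ord_recr /= big_ord_recr /= IH [in RHS]big_ord_recr /=.
by rewrite mul2n odd_double /= addr0 -mul2n mulnS add2n.
Qed.
End Expand.

Section Trig.
Variable R : realType.

Lemma sin_natpi (s : nat) : sin (s%:R * pi) = 0 :> R.
Proof. by rewrite mulr_natl -[_ *+ s]add0r (alternatingn (@sinDpi R)) sin0 mulr0. Qed.

Lemma cos_sum_zero (M s : nat) : (0 < s < 2 * M)%N ->
  \sum_(i < M) cos (s%:R * ((2 * i + 1)%:R * (pi / (2 * M)%:R))) = 0 :> R.
Proof.
move=> /andP [hs0 hsM].
have hM : (0 < 2 * M)%N by apply: leq_ltn_trans hsM.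
set h := pi / (2 * M)%:R.
have hh0 : 0 < h by rewrite divr_gt0 ?pi_gt0 ?ltr0n.
have hsh : 0 < sin (s%:R * h).
  apply: sin_gt0_pi; rewrite mulr_gt0 ?ltr0n //= /h mulrA ltr_pdivrMr ?ltr0n //.
  by rewrite mulrC ltr_pM2l ?pi_gt0 // ltr_nat.
pose f i := sin (s%:R * ((2 * i)%:R * h)).
have step : forall i : nat, 2 * sin (s%:R * h) * cos (s%:R * ((2 * i + 1)%:R * h)) = f i.+1 - f i.
  move=> i; rewrite /f.
  have e1 : s%:R * ((2 * i.+1)%:R * h) = s%:R * ((2 * i + 1)%:R * h) + s%:R * h.
    by rewrite (_ : (2 * i.+1 = 2 * i + 1 + 1)%N) ?natrD ?natrM; [ring | ring].
  have e2 : s%:R * ((2 * i)%:R * h) = s%:R * ((2 * i + 1)%:R * h) - s%:R * h.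
    by rewrite natrD natrM; ring.
  by rewrite e1 e2 sinD sinB; ring.
have : 2 * sin (s%:R * h) * \sum_(i < M) cos (s%:R * ((2 * i + 1)%:R * h)) = 0.
  rewrite mulr_sumr (eq_bigr (fun i : 'I_M => f i.+1 - f i)); last by move=> i _; apply: step.
  rewrite -(big_mkord xpredT (fun i => f i.+1 - f i)) telescope_sumr // /f muln0 mul0r mulr0 sin0 subr0.
  have -> : s%:R * ((2 * M)%:R * h) = s%:R * pi :> R.
    by congr (_ * _); rewrite /h mulrCA divff ?mulr1 // pnatr_eq0 -lt0n.
  exact: sin_natpi.
move/eqP; rewrite mulf_eq0 mulf_eq0 pnatr_eq0 /= (gt_eqF hsh) /=; by move/eqP.
Qed.
End Trig.

Section Parseval.
Variable R : realType.
Variable M : nat.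
Definition th (i : nat) : R := (2 * i + 1)%:R * (pi / (2 * M)%:R).
Definition G (p q : nat) : R := \sum_(i < M) cos (p%:R * th i) * cos (q%:R * th i).

Lemma G_sym p q : G p q = G q p.
Proof. by apply: eq_bigr => i _; rewrite mulrC. Qed.

Lemma G_split p q : (q <= p)%N ->
  G p q = (\sum_(i < M) cos ((p + q)%N%:R * th i) + \sum_(i < M) cos ((p - q)%N%:R * th i)) / 2.
Proof.
move=> hqp; rewrite -big_split mulr_suml; apply: eq_bigr => i _ /=.
rewrite natrD natrB // (mulrDl p%:R q%:R) (mulrBl (th i) p%:R q%:R) (cosD (p%:R * th i)) (cosB (p%:R * th i)); lra.
Qed.

End Parseval.

Section Parseval2.
Variable R : realType.
Variable M : nat.
Local Notation G := (@G R M).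
Local Notation th := (@th R M).

Lemma G_off p q : p != q -> (p < M)%N -> (q < M)%N -> G p q = 0.
Proof.
wlog hqp : p q / (q <= p)%N.
  move=> W hpq hp hq; case: (leqP q p) => h; first exact: W.
  by rewrite G_sym (W q p) //; [exact: ltnW | rewrite eq_sym].
move=> hpq hp hq.
have hqp2 : (q < p)%N by rewrite ltn_neqAle eq_sym hpq hqp.
have hp0 : (0 < p)%N by apply: leq_ltn_trans (leq0n q) hqp2.
rewrite G_split // !cos_sum_zero ?addr0 ?mul0r //.
  apply/andP; split; first by rewrite subn_gt0.
  apply: leq_ltn_trans (leq_subr q p) (leq_trans hp _); by rewrite leq_pmull.
apply/andP; split; first by rewrite addn_gt0 hp0.
by rewrite mul2n -addnn -addSn leq_add // ltnW.
Qed.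
Lemma G_diag p : (p < M)%N -> M%:R / 2 <= G p p.
Proof.
move=> hp; rewrite G_split // subnn.
have -> : \sum_(i < M) cos (0%N%:R * th i) = M%:R :> R.
  by rewrite (eq_bigr (fun _ => 1)) ?sumr_const ?card_ord // => i _; rewrite mul0r cos0.
case: (posnP p) => [->|hp0].
  rewrite (eq_bigr (fun _ => 1)) ?sumr_const ?card_ord; last by move=> i _; rewrite mul0r cos0.
  have := ler0n R M; lra.
by rewrite cos_sum_zero ?add0r //; apply/andP; split; lia.
Qed.

Lemma parseval (c : nat -> R) :
  M%:R / 2 * \sum_(p < M) c p ^+ 2 <= \sum_(i < M) (\sum_(p < M) c p * cos (p%:R * th i)) ^+ 2.
Proof.
have -> : \sum_(i < M) (\sum_(p < M) c p * cos (p%:R * th i)) ^+ 2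
        = \sum_(p < M) \sum_(q < M) c p * c q * G p q.
  under eq_bigr => i _ do rewrite expr2 big_distrlr /=.
  rewrite exchange_big /=; apply: eq_bigr => p _.
  rewrite exchange_big /=; apply: eq_bigr => q _.
  rewrite /G mulr_sumr; apply: eq_bigr => i _; ring.
rewrite mulr_sumr; apply: ler_sum => p _.
rewrite (bigD1 p) //= big1 ?addr0.
  rewrite -expr2 [X in _ <= X]mulrC; apply: ler_wpM2r; [exact: sqr_ge0 | exact: G_diag].
by move=> q hq; rewrite G_off ?mulr0 // eq_sym.
Qed.
End Parseval2.

Local Close Scope ring_scope.
Lemma natfact (k m : nat) : (1 <= k)%N ->
  (2 * m.+1 * (if k == 1%N then 1%N else (2 * (m %/ k) + 1)%N) ^ 2 <= (k * (m %/ k).+1 * (m %/ k).+2) ^ 2)%N.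
Proof.
move=> hk; set A := m %/ k.
have hm : (m.+1 <= k * A.+1)%N.
  have := divn_eq m k; have := ltn_pmod m hk; rewrite -/A => h1 h2; nia.
case: eqP => [e|ne].
  subst k; nia.
have hk2 : (2 <= k)%N by lia.
have s1 : ((2 * A + 1) ^ 2 <= A.+1 * A.+2 ^ 2)%N by nia.
have s2 : (2 * m.+1 * (2 * A + 1) ^ 2 <= 2 * (k * A.+1) * (A.+1 * A.+2 ^ 2))%N.
  by apply: leq_mul; [apply: leq_mul | ].
apply: leq_trans s2 _.
have e : ((k * A.+1 * A.+2) ^ 2 = k * (k * A.+1 * (A.+1 * A.+2 ^ 2)))%N by rewrite !expnS !expn0 !muln1; ring.
rewrite e; set Y := (A.+1 * A.+2 ^ 2)%N; set Z := (k * A.+1)%N.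
have -> : (2 * Z * Y = 2 * (Z * Y))%N by rewrite mulnA.
by rewrite leq_mul2r hk2 orbT.
Qed.

Local Open Scope ring_scope.
Unset Implicit Arguments.

Theorem mainTheorem8 (R : realType) (T : nat -> {poly R})
  (hT : is_chebyshev_family T) (k m : nat) (hk : (1 <= k)%N)
  (Q : {poly R}) (hQe : is_even_polyn Q) (hQd : (size Q <= (2 * m).+1)%N) :
  let A := (m %/ k)%N in
  (exists C : 'I_A.+1 -> 'I_k -> 'I_k.+1 -> 'I_2 -> R,
     (forall x : R,
        Q.[x] = \sum_(a < A.+1) \sum_(b < k) \sum_(j < k.+1) \sum_(l < 2)
                  C a b j l * (T a).[x] ^+ (2 * j) * (T b).[x] ^+ (2 * l)) /\
     \sum_(a < A.+1) \sum_(b < k) \sum_(j < k.+1) \sum_(l < 2) `|C a b j l|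
       <= (3 * k * A.+1 * A.+2)%:R * (1 + Num.sqrt 2) ^+ (2 * k) * supnorm11 Q)
  /\
  (forall (a : 'I_A.+1) (b : 'I_k) (j : 'I_k.+1) (l : 'I_2),
     exists Rs : 'I_k -> {poly R},
       (forall x : R, (T a).[x] ^+ (2 * j) * (T b).[x] ^+ (2 * l)
                      = \prod_(s < k) `|(Rs s).[x]| ^+ 2) /\
       (forall s : 'I_k,
          Rs s \in [:: 1; T a; T b; T a * T b] /\
          (is_even_polyn (Rs s) \/ is_odd_polyn (Rs s)) /\
          (size (Rs s) <= A + k)%N /\
          supnorm11 (Rs s) <= 1)).
Proof.
move=> A; split; last first.
  move=> a b j l; apply: (part2 hT) => //; rewrite -ltnS; exact: ltn_ord.
set N := (2 * m).+1.
have [c hc] := cheb_expand hT hQd.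
set N0 := supnorm11 Q.
have e1 : forall y, Q.[y] = \sum_(p < N) c p * (T p).[y].
  by move=> y; rewrite {1}hc horner_sum; apply: eq_bigr => p _; rewrite hornerZ.
have Qneg : forall y, Q.[- y] = Q.[y].
  by move=> y; move: hQe; rewrite /is_even_polyn => hQ; rewrite -[in LHS]hQ horner_comp hornerN hornerX opprK.
have Qev : forall x, Q.[x] = \sum_(n < m.+1) c (2 * n)%N * (T (2 * n)%N).[x].
  move=> x; have H := sum_even (fun p => c p * (T p).[x]) m; rewrite /= in H; rewrite -H.
  have -> : Q.[x] = (Q.[x] + Q.[- x]) / 2 by rewrite Qneg; lra.
  rewrite !e1 -big_split mulr_suml; apply: eq_bigr => p _ /=.
  rewrite (T_neg hT) -signr_odd; case: (odd p) => /=; rewrite ?expr1 ?expr0; lra.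
pose W : R := (Wn A k)%:R.
pose a2 := alpha R ^+ (2 * k).
have hrep : Rep T A k (fun x => Q.[x]) (\sum_(n < m.+1) `|c (2 * n)%N| * (3 * a2 * W)).
  apply: (Rep_ext Qev).
  apply: (@Rep_sum R T A k m.+1 (fun n x => c (2 * n)%N * (T (2 * n)%N).[x]) (fun n => `|c (2 * n)%N| * (3 * a2 * W))) => n hn.
  apply: Rep_scale; apply: Rep_T2n_all => //.
  by apply: leq_div2r; rewrite -ltnS.
have hN0 : 0 <= N0 by apply: supnorm_ge0.
have hQb : forall y, -1 <= y <= 1 -> Q.[y] ^+ 2 <= N0 ^+ 2.
  move=> y hy; rewrite -real_normK ?num_real //; apply: lerXn2r => //; rewrite ?nnegrE //.
  exact: supnorm_ub.
have Sc : \sum_(p < N) c p ^+ 2 <= 2 * N0 ^+ 2.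
  have hP := parseval N c.
  have hR : \sum_(i < N) (\sum_(p < N) c p * cos (p%:R * th R N i)) ^+ 2 <= N%:R * N0 ^+ 2.
    apply: (le_trans (y := \sum_(i < N) N0 ^+ 2)); last by rewrite sumr_const card_ord mulr_natl.
    apply: ler_sum => i _.
    have -> : \sum_(p < N) c p * cos (p%:R * th R N i) = Q.[cos (th R N i)].
      by rewrite e1; apply: eq_bigr => p _; rewrite hT.
    by apply: hQb; rewrite cos_geN1 cos_le1.
  have hNp : 0 < N%:R :> R by rewrite ltr0n.
  have := le_trans hP hR; set S := \sum_(p < N) c p ^+ 2; set Z := N0 ^+ 2; nra.
have [C [hC1 hC2]] := hrep.
exists C; split; first exact: hC1.
apply: le_trans hC2 _.
pose u n := `|c (2 * n)%N|.
have Su2 : \sum_(n < m.+1) u n ^+ 2 <= 2 * N0 ^+ 2.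
  apply: le_trans Sc.
  have H := sum_even (fun p => c p ^+ 2) m; rewrite /= in H.
  rewrite (eq_bigr (fun n : 'I_m.+1 => c (2 * n)%N ^+ 2)); last by move=> n _; rewrite /u real_normK ?num_real.
  rewrite -H; apply: ler_sum => p _; case: (odd p) => //; exact: sqr_ge0.
pose Kn := (k * A.+1 * A.+2)%N; pose K2 : R := Kn%:R.
have nf : 2 * (m.+1)%:R * W ^+ 2 <= K2 ^+ 2.
  have h := natfact m hk; rewrite -(ler_nat R) in h; rewrite !natrM -/A in h. 
  by rewrite /W /Wn /K2 /Kn !expr2 !natrM.
have hK2 : 0 < K2 by rewrite /K2 ltr0n /Kn !muln_gt0 hk.
have hW : 0 <= W by rewrite /W ler0n.
have ha2 : 0 <= a2 by rewrite /a2 exprn_ge0 // (le_trans ler01 (alpha_ge1 R)).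
set S1 := \sum_(n < m.+1) u n.
have hS1 : 0 <= S1 by apply: sumr_ge0 => n _; rewrite /u normr_ge0.
have eL : \sum_(n < m.+1) `|c (2 * n)%N| * (3 * a2 * W) = 3 * a2 * (W * S1).
  by rewrite /S1 !mulr_sumr; apply: eq_bigr => n _; rewrite /u; ring.
have eK : (3 * k * A.+1 * A.+2)%:R = 3 * K2 :> R by rewrite /K2 /Kn !natrM; ring.
rewrite eL eK.
suff hWS : W * S1 <= K2 * N0.
  have -> : 3 * K2 * (1 + Num.sqrt 2) ^+ (2 * k) * N0 = 3 * a2 * (K2 * N0) by rewrite /a2 /alpha; ring.
  by apply: ler_wpM2l => //; rewrite mulr_ge0.
have amgm : \sum_(n < m.+1) K2 * W * N0 * u n <= K2 ^+ 2 / 4 * \sum_(n < m.+1) u n ^+ 2 + (m.+1)%:R * (W ^+ 2 * N0 ^+ 2).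
  apply: (le_trans (y := \sum_(n < m.+1) (K2 ^+ 2 / 4 * u n ^+ 2 + W ^+ 2 * N0 ^+ 2))).
    apply: ler_sum => n _; have := sqr_ge0 (K2 * u n / 2 - W * N0); nra.
  by rewrite big_split /= -mulr_sumr sumr_const card_ord mulr_natl.
rewrite -mulr_sumr -/S1 in amgm.
set X := \sum_(n < m.+1) u n ^+ 2 in amgm Su2.
have hX : 0 <= X by apply: sumr_ge0 => n _; apply: sqr_ge0.
case: (eqVneq N0 0) => hN.
  have X0 : X = 0 by apply/eqP; rewrite eq_le hX andbT; move: Su2; rewrite hN expr0n /= mulr0.
  have S10 : S1 = 0.
    have := X0; rewrite /X => /eqP; rewrite psumr_eq0 => [/allP h|n _]; last exact: sqr_ge0.
    rewrite /S1 big1 // => n _; have := h n; rewrite mem_index_enum => /(_ isT) /=.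
    by rewrite sqrf_eq0 => /eqP.
  by rewrite S10 hN !mulr0.
have hNp : 0 < N0 by rewrite lt_neqAle eq_sym hN hN0.
have h2 : K2 ^+ 2 / 4 * X <= K2 ^+ 2 / 4 * (2 * N0 ^+ 2).
  by apply: ler_wpM2l => //; rewrite divr_ge0 ?sqr_ge0.
have h3 : (m.+1)%:R * (W ^+ 2 * N0 ^+ 2) <= K2 ^+ 2 / 2 * N0 ^+ 2.
  have := ler_wpM2r (sqr_ge0 N0) nf; lra.
have h4 : (K2 * N0) * (W * S1) <= (K2 * N0) * (K2 * N0).
  have -> : (K2 * N0) * (K2 * N0) = K2 ^+ 2 / 4 * (2 * N0 ^+ 2) + K2 ^+ 2 / 2 * N0 ^+ 2.
    by rewrite !expr2; field.
  have -> : (K2 * N0) * (W * S1) = K2 * W * N0 * S1 by ring.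
  lra.
by rewrite ler_pM2l ?mulr_gt0 in h4.
Qed.
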